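(* Let $(p_0,\dots,p_{n-1})$ be a closed discrete curve with $l_k=l_0$ for all $k$ (arclength parametrized), and let $\kappa\in\mathbb{R}\setminus\{0\}$. Then the curve is an equilibrium of $L+\kappa\mathrm{Vol}$ (i.e. $\nabla_{p_k}L+\kappa\nabla_{p_k}\mathrm{Vol}=0$ for all $k$) if and only if $\theta_k\neq\pi$ for all $k$ and the discrete curvature $\frac{2}{l_0}\tan(\theta_k/2)$ equals $\kappa$ for every $k$.
   Context: A closed discrete curve is an $n$-tuple $(p_0,\dots,p_{n-1})$ of points of $\mathbb{R}^2$ ($n\ge3$), indices modulo $n$, with $l_k:=|p_{k+1}-p_k|\ne0$ for all $k$. $R_\varphi$ denotes rotation of $\mathbb{R}^2$ by $\varphi$. Fix $R\in\{R_{\pi/2},R_{-\pi/2}\}$ and set $\sigma=+1$ if $R=R_{\pi/2}$, $\sigma=-1$ if $R=R_{-\pi/2}$. Edge normal $\nu_k:=R((p_{k+1}-p_k)/l_k)$. The signed angle $\theta_k\in(-\pi,\pi]$ at vertex $p_k$ is defined by $\nu_k=R_{\sigma\theta_k}\nu_{k-1}$. Length $L=\sum_k l_k$, area $\mathrm{Vol}=\frac12\sum_k\langle p_k,\nu_k\rangle l_k$, both functions on $(\mathbb{R}^2)^n$; $\nabla_{p_k}$ is the gradient with respect to $p_k$. *)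

(* Defs.v *)
From Stdlib Require Import Reals Lra Arith.
From Coquelicot Require Import Coquelicot.
Open Scope R_scope.

Definition pt := (R * R)%type.
Definition padd (u v : pt) : pt := (fst u + fst v, snd u + snd v).
Definition psub (u v : pt) : pt := (fst u - fst v, snd u - snd v).
Definition pscal (c : R) (u : pt) : pt := (c * fst u, c * snd u).
Definition pdot (u v : pt) : R := fst u * fst v + snd u * snd v.
Definition pnorm (u : pt) : R := sqrt (fst u ^ 2 + snd u ^ 2).

Definition rot (phi : R) (u : pt) : pt :=
  (cos phi * fst u - sin phi * snd u, sin phi * fst u + cos phi * snd u).

(* A configuration of n points: p : nat -> pt, only p 0 .. p (n-1) matter;
   indices are taken modulo n. *)
Definition nxt (n k : nat) : nat := (S k) mod n.
Definition prv (n k : nat) : nat := (k + n - 1) mod n.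

Definition edge_len (n : nat) (p : nat -> pt) (k : nat) : R :=
  pnorm (psub (p (nxt n k)) (p k)).

Definition closed_curve (n : nat) (p : nat -> pt) : Prop :=
  (3 <= n)%nat /\ forall k, (k < n)%nat -> edge_len n p k <> 0.

Definition Rsig (sigma : R) : pt -> pt := rot (sigma * (PI / 2)).

Definition normal (sigma : R) (n : nat) (p : nat -> pt) (k : nat) : pt :=
  Rsig sigma (pscal (/ edge_len n p k) (psub (p (nxt n k)) (p k))).

Definition Len (n : nat) (q : nat -> pt) : R :=
  sum_n (fun k => edge_len n q k) (n - 1).
Definition Vol (sigma : R) (n : nat) (q : nat -> pt) : R :=
  / 2 * sum_n (fun k => pdot (q k) (normal sigma n q k) * edge_len n q k) (n - 1).

Definition upd (q : nat -> pt) (k : nat) (v : pt) : nat -> pt :=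
  fun j => if Nat.eqb j k then v else q j.

Definition grad_at (F : (nat -> pt) -> R) (q : nat -> pt) (k : nat) (g : pt) : Prop :=
  is_derive (fun t => F (upd q k (fst (q k) + t, snd (q k)))) 0 (fst g) /\
  is_derive (fun t => F (upd q k (fst (q k), snd (q k) + t))) 0 (snd g).

Definition equilibrium (sigma kappa : R) (n : nat) (p : nat -> pt) : Prop :=
  forall k, (k < n)%nat ->
    exists gL gV, grad_at (Len n) p k gL /\ grad_at (Vol sigma n) p k gV /\
      padd gL (pscal kappa gV) = (0, 0).

(* Main.v *)
Require Import Defs.
From Stdlib Require Import Reals Lra Lia Arith Psatz.
From Coquelicot Require Import Coquelicot.
Open Scope R_scope.

Ltac rring := match goal with |- ?a = ?b => change (a = b :> R); ring end.

Definition indb (b : bool) : R := if b then 1 else 0.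
Definition J (s : R) (u : pt) : pt := (- s * snd u, s * fst u).

Lemma Rsig_J sigma u : (sigma = 1 \/ sigma = -1) -> Rsig sigma u = J sigma u.
Proof.
  intros [-> | ->]; unfold Rsig, rot, J; destruct u as [x y]; simpl.
  - rewrite Rmult_1_l, cos_PI2, sin_PI2; f_equal; ring.
  - replace (-1 * (PI/2)) with (- (PI/2)) by ring.
    rewrite cos_neg, sin_neg, cos_PI2, sin_PI2; f_equal; ring.
Qed.

Lemma pnorm0 u : pnorm u = 0 -> u = (0,0).
Proof.
  destruct u as [x y]; unfold pnorm; simpl; intro H.
  apply sqrt_eq_0 in H; [| nra].
  assert (x = 0) by nra. assert (y = 0) by nra. subst; auto.
Qed.

Lemma upd_lin p k e t i :
  upd p k (padd (p k) (pscal t e)) i = padd (p i) (pscal (t * indb (Nat.eqb i k)) e).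
Proof.
  unfold upd, indb; destruct (Nat.eqb_spec i k) as [->|]; destruct (p _) as [x y];
  destruct e as [a b]; unfold padd, pscal; simpl; f_equal; ring.
Qed.

Lemma is_derive_sum (f : nat -> R -> R) (d : nat -> R) m x :
  (forall j, (j <= m)%nat -> is_derive (f j) x (d j)) ->
  is_derive (fun t => sum_n (fun j => f j t) m) x (sum_n d m).
Proof.
  induction m; intro H.
  - rewrite sum_O. eapply is_derive_ext; [| apply H; lia].
    intro t; simpl; rewrite sum_O; auto.
  - rewrite sum_Sn. eapply is_derive_ext.
    2: apply (is_derive_plus (K:=R_AbsRing) (V:=R_NormedModule)); [apply IHm; intros; apply H; lia| apply H; lia].
    intro t; simpl; rewrite sum_Sn; auto.
Qed.

Lemma sum_ind (f : nat -> R) k m : (k <= m)%nat ->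
  sum_n (fun j => indb (Nat.eqb j k) * f j) m = f k.
Proof.
  induction m; intro H.
  - rewrite sum_O. assert (k = 0%nat) by lia; subst; simpl; unfold indb; simpl; ring.
  - rewrite sum_Sn. destruct (Nat.eq_dec k (S m)) as [->|Hne].
    + rewrite sum_n_ext_loc with (b := fun _ => 0).
      * rewrite sum_n_const. unfold indb; rewrite Nat.eqb_refl. unfold plus, mult; simpl. rring.
      * intros j Hj. unfold indb; destruct (Nat.eqb_spec j (S m)); [lia|rring].
    + rewrite IHm by lia. unfold indb; destruct (Nat.eqb_spec (S m) k); [lia|].
      unfold plus; simpl; rring.
Qed.

Lemma nxt_small n j : (j + 1 < n)%nat -> nxt n j = S j.
Proof. intro; unfold nxt; apply Nat.mod_small; lia. Qed.
Lemma nxt_last n j : (j + 1 = n)%nat -> nxt n j = 0%nat.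
Proof. intro; unfold nxt; replace (S j) with n by lia; apply Nat.Div0.mod_same. Qed.
Lemma prv_0 n : (1 <= n)%nat -> prv n 0 = (n - 1)%nat.
Proof. intro; unfold prv; apply Nat.mod_small; lia. Qed.
Lemma prv_S n k : (S k < n)%nat -> prv n (S k) = k.
Proof.
  intro; unfold prv. replace (S k + n - 1)%nat with (k + 1 * n)%nat by lia.
  rewrite Nat.Div0.mod_add. apply Nat.mod_small; lia.
Qed.

Ltac eqb_solve := match goal with |- Nat.eqb ?a ?b = Nat.eqb ?c ?d => destruct (Nat.eqb_spec a b), (Nat.eqb_spec c d); try reflexivity; lia end.

Lemma nxt_eqb n j k : (j < n)%nat -> (k < n)%nat ->
  Nat.eqb (nxt n j) k = Nat.eqb j (prv n k).
Proof.
  intros Hj Hk.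
  destruct k as [|k].
  - rewrite prv_0 by lia.
    destruct (Nat.eq_dec (j+1) n).
    + rewrite nxt_last by lia. eqb_solve.
    + rewrite nxt_small by lia. eqb_solve.
  - rewrite prv_S by lia.
    destruct (Nat.eq_dec (j+1) n).
    + rewrite nxt_last by lia. eqb_solve.
    + rewrite nxt_small by lia. eqb_solve.
Qed.

Lemma prv_lt n k : (1 <= n)%nat -> (prv n k < n)%nat.
Proof. intro; unfold prv; apply Nat.mod_upper_bound; lia. Qed.
Lemma nxt_lt n k : (1 <= n)%nat -> (nxt n k < n)%nat.
Proof. intro; unfold nxt; apply Nat.mod_upper_bound; lia. Qed.
Lemma nxt_prv n k : (k < n)%nat -> nxt n (prv n k) = k.
Proof.
  intro Hk. destruct k as [|k].
  - rewrite prv_0 by lia. apply nxt_last; lia.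
  - rewrite prv_S by lia. apply nxt_small; lia.
Qed.

Lemma sum_ind2 (f g : nat -> R) n k : (k < n)%nat ->
  sum_n (fun j => indb (Nat.eqb j k) * f j + indb (Nat.eqb (nxt n j) k) * g j) (n - 1)
  = f k + g (prv n k).
Proof.
  intro Hk.
  rewrite (sum_n_plus (G:=R_AbelianMonoid) (fun j => indb (Nat.eqb j k) * f j)
            (fun j => indb (Nat.eqb (nxt n j) k) * g j)).
  rewrite sum_ind by lia.
  rewrite sum_n_ext_loc with (b := fun j => indb (Nat.eqb j (prv n k)) * g j).
  - rewrite sum_ind. reflexivity. pose proof (prv_lt n k); lia.
  - intros j Hj. rewrite nxt_eqb by lia. reflexivity.
Qed.

Lemma d_norm a b e al be : pnorm (psub a b) <> 0 ->
  is_derive (fun t => pnorm (psub (padd a (pscal (t*al) e)) (padd b (pscal (t*be) e)))) 0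
    ((al - be) * pdot (psub a b) e / pnorm (psub a b)).
Proof.
  destruct a as [a1 a2], b as [b1 b2], e as [e1 e2].
  unfold pnorm, psub, padd, pscal, pdot; cbn [fst snd]. intro H.
  assert (Hp : 0 < (a1 - b1)^2 + (a2 - b2)^2).
  { assert (H0 : 0 <= (a1 - b1)^2 + (a2 - b2)^2) by (pose proof (pow2_ge_0 (a1-b1)); pose proof (pow2_ge_0 (a2-b2)); lra).
    destruct (Rle_lt_or_eq_dec _ _ H0) as [|He]; [auto |].
    rewrite <- He in H. rewrite sqrt_0 in H. lra. }
  auto_derive.
  - replace (a1 + 0 * al * e1 - (b1 + 0 * be * e1)) with (a1 - b1) by ring.
    replace (a2 + 0 * al * e2 - (b2 + 0 * be * e2)) with (a2 - b2) by ring. nra.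
  - replace (a1 + 0 * al * e1 - (b1 + 0 * be * e1)) with (a1 - b1) by ring.
    replace (a2 + 0 * al * e2 - (b2 + 0 * be * e2)) with (a2 - b2) by ring.
    set (S := sqrt ((a1-b1)^2+(a2-b2)^2)) in *.
    match goal with |- context [sqrt ?X] => replace X with ((a1-b1)^2+(a2-b2)^2) by ring end.
    fold S. match goal with |- ?a = ?b => change (a = b :> R) end. field. auto.
Qed.

Lemma d_vol s a b e al be :
  is_derive (fun t => pdot (padd b (pscal (t*be) e))
                 (J s (psub (padd a (pscal (t*al) e)) (padd b (pscal (t*be) e))))) 0
    (be * (pdot e (J s (psub a b)) - pdot b (J s e)) + al * pdot b (J s e)).
Proof.
  destruct a as [a1 a2], b as [b1 b2], e as [e1 e2].
  unfold J, psub, padd, pscal, pdot; simpl.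
  auto_derive; auto. match goal with |- ?a = ?b => change (a = b :> R) end. ring.
Qed.

Lemma vol_term sigma n q j : (sigma = 1 \/ sigma = -1) ->
  pdot (q j) (normal sigma n q j) * edge_len n q j =
  pdot (q j) (J sigma (psub (q (nxt n j)) (q j))).
Proof.
  intro Hs. unfold normal. rewrite Rsig_J by auto.
  unfold edge_len. set (d := psub (q (nxt n j)) (q j)).
  destruct (Req_dec (pnorm d) 0) as [H0|H0].
  - rewrite H0. rewrite (pnorm0 _ H0). destruct (q j) as [x y].
    unfold J, pscal, pdot; simpl; ring.
  - destruct d as [d1 d2], (q j) as [x y]. unfold J, pscal, pdot; cbn [fst snd].
    field. auto.
Qed.

Lemma dLen n p k e : closed_curve n p -> (k < n)%nat ->
  is_derive (fun t => Len n (upd p k (padd (p k) (pscal t e)))) 0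
   (pdot (psub (p k) (p (prv n k))) e / edge_len n p (prv n k)
    - pdot (psub (p (nxt n k)) (p k)) e / edge_len n p k).
Proof.
  intros [Hn Hl] Hk.
  apply is_derive_ext with (f := fun t => sum_n (fun j => pnorm (psub
     (padd (p (nxt n j)) (pscal (t * indb (Nat.eqb (nxt n j) k)) e))
     (padd (p j) (pscal (t * indb (Nat.eqb j k)) e)))) (n-1)).
  { intro t. unfold Len, edge_len. apply sum_n_ext; intro j. rewrite !upd_lin. reflexivity. }
  set (F := fun j => pdot (psub (p (nxt n j)) (p j)) e / pnorm (psub (p (nxt n j)) (p j))).
  assert (E : sum_n (fun j => (indb (Nat.eqb (nxt n j) k) - indb (Nat.eqb j k)) *
       pdot (psub (p (nxt n j)) (p j)) e / pnorm (psub (p (nxt n j)) (p j))) (n-1) =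
     pdot (psub (p k) (p (prv n k))) e / edge_len n p (prv n k)
    - pdot (psub (p (nxt n k)) (p k)) e / edge_len n p k).
  { rewrite sum_n_ext with (b := fun j => indb (Nat.eqb j k) * (- F j) + indb (Nat.eqb (nxt n j) k) * F j).
    - rewrite sum_ind2 by auto. unfold F, edge_len. rewrite nxt_prv by auto. 
      match goal with |- ?a = ?b => change (a = b :> R) end. ring.
    - intro j. unfold F. match goal with |- ?a = ?b => change (a = b :> R) end.
      unfold Rdiv. ring. }
  rewrite <- E. apply is_derive_sum. intros j Hj.
  apply d_norm. apply Hl. lia.
Qed.

Lemma dVol sigma n p k e : (sigma = 1 \/ sigma = -1) -> (k < n)%nat ->
  is_derive (fun t => Vol sigma n (upd p k (padd (p k) (pscal t e)))) 0
   (/2 * (pdot e (J sigma (psub (p (nxt n k)) (p k))) - pdot (p k) (J sigma e)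
          + pdot (p (prv n k)) (J sigma e))).
Proof.
  intros Hs Hk.
  apply is_derive_ext with (f := fun t => /2 * sum_n (fun j => pdot
     (padd (p j) (pscal (t * indb (Nat.eqb j k)) e))
     (J sigma (psub
     (padd (p (nxt n j)) (pscal (t * indb (Nat.eqb (nxt n j) k)) e))
     (padd (p j) (pscal (t * indb (Nat.eqb j k)) e))))) (n-1)).
  { intro t. unfold Vol. f_equal. apply sum_n_ext; intro j. rewrite vol_term by auto.
    rewrite !upd_lin. reflexivity. }
  apply is_derive_scal.
  rewrite <- (sum_ind2 (fun j => pdot e (J sigma (psub (p (nxt n j)) (p j))) - pdot (p j) (J sigma e))
                       (fun j => pdot (p j) (J sigma e)) n k Hk).
  apply is_derive_sum. intros j Hj. apply d_vol.
Qed.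

Lemma alg (s th k l u v u' v' : R) :
  (s = 1 \/ s = -1) -> l <> 0 -> u^2 + v^2 = 1 -> -PI < th <= PI ->
  (-s*v', s*u') = rot (s*th) (-s*v, s*u) ->
  ((u - u' + k*(l/2)*(-s)*(v'+v) = 0 /\ v - v' + k*(l/2)*s*(u'+u) = 0) <->
   (th <> PI /\ 2 / l * tan (th/2) = k)).
Proof.
  intros Hs Hl Huv Hth Hrot. unfold rot in Hrot; cbn [fst snd] in Hrot.
  injection Hrot; clear Hrot; intros H2 H1.
  assert (Hs2 : s*s = 1) by (destruct Hs; subst; ring).
  assert (Hc : cos (s*th) = cos th) by (destruct Hs; subst; [f_equal; ring| replace (-1*th) with (-th) by ring; apply cos_neg]).
  assert (Hsn : sin (s*th) = s * sin th) by (destruct Hs; subst; [rewrite Rmult_1_l; ring| replace (-1*th) with (-th) by ring; rewrite sin_neg; ring]).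
  rewrite Hc, Hsn in *.
  set (c := cos th) in *. set (sn := sin th) in *.
  assert (Hv' : v' = c*v + s*sn*u).
  { apply (f_equal (fun x => -s * x)) in H1. replace v' with (-s*(-s*v')) by (rewrite <- (Rmult_1_l v') at 2; rewrite <- Hs2; ring).
    rewrite H1. replace (c*v + s*sn*u) with ((s*s)*(c*v) + (s*s)*s*sn*u) by (rewrite Hs2; ring). ring. }
  assert (Hu' : u' = c*u - s*sn*v).
  { replace u' with (s*(s*u')) by (rewrite <- (Rmult_1_l u') at 2; rewrite <- Hs2; ring).
    rewrite H2. replace (c*u - s*sn*v) with ((s*s)*(c*u) - (s*s)*s*sn*v) by (rewrite Hs2; ring). ring. }
  clear H1 H2. subst u' v'.
  set (lam := k*(l/2)).
  set (A := 1 - c - lam*sn).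
  set (B := sn - lam*(1+c)).
  assert (E1 : u - (c*u - s*sn*v) + lam*(-s)*(c*v + s*sn*u + v) = A*u + s*B*v).
  { unfold A, B. replace (lam*(-s)*(c*v + s*sn*u + v)) with (-s*lam*c*v - (s*s)*lam*sn*u - s*lam*v) by ring.
    rewrite Hs2. ring. }
  assert (E2 : v - (c*v + s*sn*u) + lam*s*(c*u - s*sn*v + u) = A*v - s*B*u).
  { replace (lam*s*(c*u - s*sn*v + u)) with (s*lam*c*u - (s*s)*lam*sn*v + s*lam*u) by ring.
    unfold A, B. rewrite Hs2. ring. }
  rewrite E1, E2.
  set (h := th/2).
  assert (Hc2 : c = 2 * cos h ^2 - 1) by (unfold c; replace th with (2*h) by (unfold h; field); rewrite cos_2a_cos; unfold Rsqr; ring).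
  assert (Hs2' : sn = 2 * sin h * cos h) by (unfold sn; replace th with (2*h) by (unfold h; field); rewrite sin_2a; ring).
  assert (Hsc : sin h ^2 + cos h ^2 = 1) by (pose proof (sin2_cos2 h); unfold Rsqr in *; nra).
  assert (HA : A = 2 * sin h * (sin h - lam * cos h)) by (unfold A; rewrite Hc2, Hs2'; nra).
  assert (HB : B = 2 * cos h * (sin h - lam * cos h)) by (unfold B; rewrite Hc2, Hs2'; nra).
  split.
  - intros [F1 F2].
    assert (A0 : A = 0).
    { replace A with (A*(u^2+v^2)) by (rewrite Huv; ring). 
      replace (A*(u^2+v^2)) with (u*(A*u + s*B*v) + v*(A*v - s*B*u)) by ring. rewrite F1, F2; ring. }
    assert (B0 : B = 0).
    { replace B with (s*s*B*(u^2+v^2)) by (rewrite Huv, Hs2; ring).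
      replace (s*s*B*(u^2+v^2)) with (s*(v*(A*u + s*B*v) - u*(A*v - s*B*u))) by ring. rewrite F1, F2; ring. }
    assert (Hch : cos h <> 0).
    { intro Hz. rewrite HA, Hz in A0. assert (sin h ^2 = 1) by (rewrite Hz in Hsc; lra). nra. }
    split.
    + intro Hp. apply Hch. unfold h. rewrite Hp. apply cos_PI2.
    + rewrite HB in B0. assert (Hd : sin h = lam * cos h).
      { apply Rmult_integral in B0. destruct B0 as [B0|B0]; [|lra].
        apply Rmult_integral in B0; destruct B0; [lra| contradiction]. }
      unfold tan. fold h. rewrite Hd. unfold lam. field. auto.
  - intros [Hpi Htan].
    assert (Hch : 0 < cos h).
    { apply cos_gt_0; unfold h; [lra|]. destruct Hth as [_ Hle].
      destruct (Rle_lt_or_eq_dec _ _ Hle); [lra| contradiction]. }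
    assert (Hd : sin h = lam * cos h).
    { unfold lam. rewrite <- Htan. unfold tan. fold h. field. split; lra. }
    assert (A0 : A = 0) by (rewrite HA, Hd; ring).
    assert (B0 : B = 0) by (rewrite HB, Hd; ring).
    rewrite A0, B0. split; ring.
Qed.

Definition DL n p k e := pdot (psub (p k) (p (prv n k))) e / edge_len n p (prv n k)
    - pdot (psub (p (nxt n k)) (p k)) e / edge_len n p k.
Definition DV sigma n (p : nat -> pt) k e := /2 * (pdot e (J sigma (psub (p (nxt n k)) (p k))) - pdot (p k) (J sigma e)
          + pdot (p (prv n k)) (J sigma e)).

Lemma grad_L n p k : closed_curve n p -> (k < n)%nat ->
  grad_at (Len n) p k (DL n p k (1,0), DL n p k (0,1)).
Proof.
  intros Hc Hk. split; cbn [fst snd].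
  - eapply is_derive_ext; [| apply (dLen n p k (1,0)); auto].
    intro t; cbn beta. f_equal. f_equal. unfold padd, pscal; cbn [fst snd]. f_equal; ring.
  - eapply is_derive_ext; [| apply (dLen n p k (0,1)); auto].
    intro t; cbn beta. f_equal. f_equal. unfold padd, pscal; cbn [fst snd]. f_equal; ring.
Qed.

Lemma grad_V sigma n p k : (sigma = 1 \/ sigma = -1) -> (k < n)%nat ->
  grad_at (Vol sigma n) p k (DV sigma n p k (1,0), DV sigma n p k (0,1)).
Proof.
  intros Hc Hk. split; cbn [fst snd].
  - eapply is_derive_ext; [| apply (dVol sigma n p k (1,0)); auto].
    intro t; cbn beta. f_equal. f_equal. unfold padd, pscal; cbn [fst snd]. f_equal; ring.
  - eapply is_derive_ext; [| apply (dVol sigma n p k (0,1)); auto].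
    intro t; cbn beta. f_equal. f_equal. unfold padd, pscal; cbn [fst snd]. f_equal; ring.
Qed.

Lemma grad_uniq F q k g1 g2 : grad_at F q k g1 -> grad_at F q k g2 -> g1 = g2.
Proof.
  intros [A1 B1] [A2 B2]. destruct g1, g2; cbn [fst snd] in *.
  apply is_derive_unique in A1, A2, B1, B2. f_equal; congruence.
Qed.

Theorem mainTheorem5 (n : nat) (p : nat -> pt) (sigma kappa : R) (theta : nat -> R) :
  closed_curve n p ->
  (sigma = 1 \/ sigma = -1) ->
  (forall k, (k < n)%nat ->
     - PI < theta k <= PI /\
     normal sigma n p k = rot (sigma * theta k) (normal sigma n p (prv n k))) ->
  (forall k, (k < n)%nat -> edge_len n p k = edge_len n p 0) ->
  kappa <> 0 ->
  (equilibrium sigma kappa n p <->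
   (forall k, (k < n)%nat -> theta k <> PI) /\
   (forall k, (k < n)%nat -> 2 / edge_len n p 0 * tan (theta k / 2) = kappa)).
Proof.
  intros Hc Hs Hth Hl Hk0.
  assert (Hn : (3 <= n)%nat) by apply Hc.
  set (l := edge_len n p 0) in *.
  assert (Hl0 : l <> 0) by (apply Hc; lia).
  assert (Key : forall k, (k < n)%nat ->
    (padd (DL n p k (1,0), DL n p k (0,1)) (pscal kappa (DV sigma n p k (1,0), DV sigma n p k (0,1))) = (0,0)
     <-> theta k <> PI /\ 2 / l * tan (theta k / 2) = kappa)).
  { intros k Hk.
    assert (Hpk : (prv n k < n)%nat) by (apply prv_lt; lia).
    destruct (Hth k Hk) as [Hr Hnorm].
    pose proof (Hl k Hk) as Hlk. pose proof (Hl _ Hpk) as Hlp. fold l in Hlk, Hlp.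
    set (dk := psub (p (nxt n k)) (p k)) in *.
    set (dp := psub (p k) (p (prv n k))) in *.
    assert (Hdp : pnorm dp = l).
    { rewrite <- Hlp. unfold edge_len. rewrite nxt_prv by auto. reflexivity. }
    assert (Huv : (/l * fst dp)^2 + (/l * snd dp)^2 = 1).
    { unfold pnorm in Hdp. assert (HX: fst dp ^2 + snd dp ^2 = l^2).
      { rewrite <- Hdp. rewrite pow2_sqrt; [reflexivity|].
        pose proof (pow2_ge_0 (fst dp)); pose proof (pow2_ge_0 (snd dp)); lra. }
      field_simplify; [| auto]. rewrite HX. field. auto. }
    unfold normal in Hnorm. rewrite !Rsig_J in Hnorm by auto.
    unfold edge_len in Hnorm. rewrite !nxt_prv in Hnorm by auto.
    fold dk in Hnorm.
    unfold edge_len in Hlk, Hlp. rewrite nxt_prv in Hlp by auto. fold dk in Hlk. fold dp in Hnorm, Hlp.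
    rewrite Hlk, Hlp in Hnorm.
    pose proof (alg sigma (theta k) kappa l (/l * fst dp) (/l * snd dp) (/l * fst dk) (/l * snd dk)
                  Hs Hl0 Huv Hr Hnorm) as HA.
    rewrite <- HA.
    assert (Hpair : padd (DL n p k (1,0), DL n p k (0,1)) (pscal kappa (DV sigma n p k (1,0), DV sigma n p k (0,1)))
      = (/l * fst dp - /l * fst dk + kappa*(l/2)*(-sigma)*(/l * snd dk + /l * snd dp),
         /l * snd dp - /l * snd dk + kappa*(l/2)*sigma*(/l * fst dk + /l * fst dp))).
    { unfold DL, DV. unfold edge_len. rewrite !nxt_prv by auto. fold dp dk.
      rewrite Hlk, Hlp. unfold dp, dk. destruct (p k) as [a1 a2], (p (prv n k)) as [b1 b2], (p (nxt n k)) as [c1 c2].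
      unfold padd, pscal, psub, pdot, J; cbn [fst snd]. f_equal; field; auto. }
    rewrite Hpair. split.
    - intro H. injection H. auto.
    - intros [E1 E2]. rewrite E1, E2. reflexivity. }
  split.
  - intro Heq. split; intros k Hk; destruct (Heq k Hk) as (gL & gV & HL & HV & E);
    rewrite (grad_uniq _ _ _ _ _ HL (grad_L n p k Hc Hk)),
            (grad_uniq _ _ _ _ _ HV (grad_V sigma n p k Hs Hk)) in E;
    apply (Key k Hk) in E; tauto.
  - intros [A B] k Hk. exists (DL n p k (1,0), DL n p k (0,1)), (DV sigma n p k (1,0), DV sigma n p k (0,1)).
    split; [apply grad_L; auto|]. split; [apply grad_V; auto|].
    apply Key; auto.
Qed.
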